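(* Let $\mathfrak{n}$ be the real $7$-dimensional Lie algebra with basis $e_1,\dots,e_7$ whose nonzero brackets (up to antisymmetry) are $[e_1,e_2]=e_3$, $[e_1,e_3]=e_4$, $[e_1,e_4]=e_6$, $[e_1,e_6]=e_7$, $[e_2,e_3]=e_5$, $[e_2,e_5]=e_6$, $[e_2,e_6]=e_7$, $[e_3,e_4]=-e_7$, $[e_3,e_5]=e_7$. Then $\mathfrak{n}$ is an Einstein nilradical.
   Context: A real nilpotent Lie algebra $\mathfrak{n}$ is called an Einstein nilradical if it admits an inner product such that the left-invariant Riemannian metric it defines on the simply connected nilpotent Lie group with Lie algebra $\mathfrak{n}$ is a nilsoliton, i.e. its Ricci operator satisfies $\mathrm{Ric}=c\,\mathrm{Id}+D$ for some $c\in\mathbb{R}$ and some derivation $D$ of $\mathfrak{n}$. Brackets of basis elements not listed are zero. *)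

(* Defs.v *)
From HB Require Import structures.
From mathcomp Require Import all_boot all_order all_algebra.
From mathcomp Require Import reals.
Set Implicit Arguments. Unset Strict Implicit. Unset Printing Implicit Defensive.
Import Order.TTheory GRing.Theory Num.Theory.
Local Open Scope ring_scope.

(* Vectors of the n-dimensional real vector space are row vectors 'rV[R]_n;
   the standard basis vector e_(i+1) of the paper is [delta_mx 0 i].
   Linear endomorphisms are matrices acting on the right: x |-> x *m D. *)

Definition ebasis (R : realType) (n : nat) (i : 'I_n) : 'rV[R]_n := delta_mx 0 i.

Definition bracket_of_consts (R : realType) (n : nat)
  (C : 'I_n -> 'I_n -> 'rV[R]_n) (u v : 'rV[R]_n) : 'rV[R]_n :=
  \sum_(i < n) \sum_(j < n) (u 0 i * v 0 j) *: C i j.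

Definition is_derivation (R : realType) (n : nat)
  (br : 'rV[R]_n -> 'rV[R]_n -> 'rV[R]_n) (D : 'M[R]_n) : Prop :=
  forall x y : 'rV[R]_n, br x y *m D = br (x *m D) y + br x (y *m D).

(* Inner products on R^n are parametrized by an invertible matrix P: the
   inner product <.,.>_P is the one for which the rows of P form an
   orthonormal basis.  Every inner product arises this way. *)
Definition ip_of (R : realType) (n : nat) (P : 'M[R]_n) (x y : 'rV[R]_n) : R :=
  ((x *m invmx P) *m (y *m invmx P)^T) 0 0.

(* Ricci form of the left-invariant metric on the simply connected nilpotent
   Lie group with Lie algebra (R^n, br) and inner product <.,.>_P, given by the
   standard formula for nilpotent Lie algebras, with f_i = row i P an
   orthonormal basis:
     ric(x,y) = -1/2 sum_{i,j} <[x,f_i],f_j><[y,f_i],f_j>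
                + 1/4 sum_{i,j} <[f_i,f_j],x><[f_i,f_j],y>. *)
Definition ricci_form (R : realType) (n : nat)
  (br : 'rV[R]_n -> 'rV[R]_n -> 'rV[R]_n) (P : 'M[R]_n) (x y : 'rV[R]_n) : R :=
  let f := fun i : 'I_n => row i P in
  let ip := ip_of P in
  - (1/2) * (\sum_(i < n) \sum_(j < n) ip (br x (f i)) (f j) * ip (br y (f i)) (f j))
  + (1/4) * (\sum_(i < n) \sum_(j < n) ip (br (f i) (f j)) x * ip (br (f i) (f j)) y).

Definition ricci_op (R : realType) (n : nat)
  (br : 'rV[R]_n -> 'rV[R]_n -> 'rV[R]_n) (P : 'M[R]_n) (x : 'rV[R]_n) : 'rV[R]_n :=
  \sum_(k < n) ricci_form br P x (row k P) *: row k P.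

Definition is_nilsoliton (R : realType) (n : nat)
  (br : 'rV[R]_n -> 'rV[R]_n -> 'rV[R]_n) (P : 'M[R]_n) : Prop :=
  P \in unitmx /\
  exists (c : R) (D : 'M[R]_n), is_derivation br D /\
    forall x : 'rV[R]_n, ricci_op br P x = c *: x + x *m D.

Definition einstein_nilradical (R : realType) (n : nat)
  (br : 'rV[R]_n -> 'rV[R]_n -> 'rV[R]_n) : Prop :=
  exists P : 'M[R]_n, is_nilsoliton br P.

(* The 7-dimensional algebra of the statement, 0-based indices
   (paper's e_k is ebasis (k-1)).  Brackets [e_i,e_j] for i<j: *)
Definition n7_upper (R : realType) (i j : nat) : 'rV[R]_7 :=
  match i, j with
  | 0, 1 => ebasis R (inord 2)
  | 0, 2 => ebasis R (inord 3)
  | 0, 3 => ebasis R (inord 5)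
  | 0, 5 => ebasis R (inord 6)
  | 1, 2 => ebasis R (inord 4)
  | 1, 4 => ebasis R (inord 5)
  | 1, 5 => ebasis R (inord 6)
  | 2, 3 => - ebasis R (inord 6)
  | 2, 4 => ebasis R (inord 6)
  | _, _ => 0
  end.

Definition n7_consts (R : realType) (i j : 'I_7) : 'rV[R]_7 :=
  if (i < j)%N then n7_upper R i j
  else if (j < i)%N then - n7_upper R j i
  else 0.

Definition n7_bracket (R : realType) : 'rV[R]_7 -> 'rV[R]_7 -> 'rV[R]_7 :=
  bracket_of_consts (n7_consts R).
Arguments n7_bracket R : clear implicits.

(* Main.v *)
Require Import Defs.
From HB Require Import structures.
From mathcomp Require Import all_boot all_order all_algebra.
From mathcomp Require Import reals.
From mathcomp Require Import ring lra.
Set Implicit Arguments. Unset Strict Implicit. Unset Printing Implicit Defensive.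
Import Order.TTheory GRing.Theory Num.Theory.
Local Open Scope ring_scope.


Lemma sum_delta (R : realType) n (F : 'I_n -> R) (j : 'I_n) :
  \sum_k F k * ('e_k : 'rV[R]_n) 0 j = F j.
Proof.
rewrite (bigD1 j) //= mxE !eqxx mulr1 big1 ?addr0 // => i ne.
by rewrite mxE eqxx /= eq_sym (negbTE ne) mulr0.
Qed.

Lemma br_lin (R : realType) n (C : 'I_n -> 'I_n -> 'rV[R]_n) (P : 'M[R]_n) (u v : 'rV[R]_n) :
  bracket_of_consts C (u *m P) (v *m P) =
  \sum_a \sum_b (u 0 a * v 0 b) *: bracket_of_consts C (row a P) (row b P).
Proof.
rewrite /bracket_of_consts; symmetry.
under eq_bigr => a _ do under eq_bigr => b _ do
  (rewrite scaler_sumr; under eq_bigr => i _ do rewrite scaler_sumr).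
under eq_bigr => a _ do rewrite exchange_big /=.
rewrite exchange_big /=.
apply: eq_bigr => i _.
under eq_bigr => a _ do rewrite exchange_big /=.
rewrite exchange_big /=.
apply: eq_bigr => j _.
under eq_bigr => a _ do under eq_bigr => b _ do rewrite scalerA.
under eq_bigr => a _ do rewrite -scaler_suml.
rewrite -scaler_suml; congr (_ *: _).
rewrite !mxE big_distrl /=; apply: eq_bigr => a _.
rewrite big_distrr /=; apply: eq_bigr => b _.
rewrite !mxE; ring.
Qed.

Lemma brQ (R : realType) n (C : 'I_n -> 'I_n -> 'rV[R]_n) (P Q : 'M[R]_n)
  (cc : 'I_n -> 'I_n -> 'I_n -> R) :
  Q *m P = 1%:M -> P *m Q = 1%:M ->
  (forall a b, bracket_of_consts C (row a P) (row b P) = \sum_k cc a b k *: row k P) ->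
  forall u v k, (bracket_of_consts C u v *m Q) 0 k =
     \sum_a \sum_b (u *m Q) 0 a * (v *m Q) 0 b * cc a b k.
Proof.
move=> QP PQ Hc u v k.
have -> : bracket_of_consts C u v = bracket_of_consts C ((u *m Q) *m P) ((v *m Q) *m P).
  by rewrite -!mulmxA QP !mulmx1.
rewrite br_lin mulmx_suml summxE; apply: eq_bigr => a _.
rewrite mulmx_suml summxE; apply: eq_bigr => b _.
rewrite -scalemxAl Hc mulmx_suml mxE summxE.
under eq_bigr => l _ do rewrite -scalemxAl -row_mul PQ row1 mxE.
by rewrite sum_delta.
Qed.

Lemma sum_deltaR (R : realType) n (F : 'I_n -> R) (j : 'I_n) :
  \sum_k F k * ('e_j : 'rV[R]_n) 0 k = F j.
Proof.
rewrite (bigD1 j) //= mxE !eqxx mulr1 big1 ?addr0 // => i ne.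
by rewrite mxE eqxx /= (negbTE ne) mulr0.
Qed.

Lemma sum_deltaL (R : realType) n (F : 'I_n -> R) (j : 'I_n) :
  \sum_k ('e_j : 'rV[R]_n) 0 k * F k = F j.
Proof. by under eq_bigr do rewrite mulrC; rewrite sum_deltaR. Qed.

Lemma ipQ (R : realType) n (P Q : 'M[R]_n) x y : P *m Q = 1%:M ->
  ip_of P x y = \sum_l (x *m Q) 0 l * (y *m Q) 0 l.
Proof.
move=> PQ.
have Pu := (mulmx1_unit PQ).1.
have iP : invmx P = Q by rewrite -(mulmx1 (invmx P)) -PQ mulmxA mulVmx ?mul1mx.
rewrite /ip_of iP mxE; apply: eq_bigr => l _; by rewrite [_^T _ _]mxE.
Qed.

Lemma rowPQ (R : realType) n (P Q : 'M[R]_n) k : P *m Q = 1%:M -> row k P *m Q = 'e_k.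
Proof. by move=> PQ; rewrite -row_mul PQ row1. Qed.

Lemma swap3 (R : realType) n (F : 'I_n -> 'I_n -> 'I_n -> R) :
  \sum_i \sum_j \sum_a F a i j = \sum_a \sum_i \sum_j F a i j.
Proof.
under eq_bigr do rewrite exchange_big /=.
by rewrite exchange_big.
Qed.

Lemma L_a (R : realType) n (X : 'I_n -> R) (F : 'I_n -> 'I_n -> 'I_n -> R) (G : 'I_n -> 'I_n -> R) :
  \sum_i \sum_j (\sum_a X a * F a i j) * G i j = \sum_a X a * \sum_i \sum_j F a i j * G i j.
Proof.
under eq_bigr do under eq_bigr do rewrite big_distrl.
rewrite swap3; apply: eq_bigr => a _.
rewrite big_distrr; apply: eq_bigr => i _.
rewrite big_distrr; apply: eq_bigr => j _ /=.
by rewrite mulrA.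
Qed.

Lemma L_b (R : realType) n (X : 'I_n -> R) (H : 'I_n -> 'I_n -> 'I_n -> R) (G : 'I_n -> 'I_n -> R) :
  \sum_i \sum_j (\sum_l H i j l * X l) * G i j = \sum_a X a * \sum_i \sum_j H i j a * G i j.
Proof.
under eq_bigr do under eq_bigr do under eq_bigr do rewrite mulrC.
by rewrite L_a.
Qed.

Definition Mf (R : realType) n (cc : 'I_n -> 'I_n -> 'I_n -> R) (a b : 'I_n) : R :=
  - (1/2) * (\sum_i \sum_j cc a i j * cc b i j)
  + (1/4) * (\sum_i \sum_j cc i j a * cc i j b).

Lemma ricci_f (R : realType) n (C : 'I_n -> 'I_n -> 'rV[R]_n) (P Q : 'M[R]_n)
  (cc : 'I_n -> 'I_n -> 'I_n -> R) :
  P *m Q = 1%:M ->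
  (forall a b, bracket_of_consts C (row a P) (row b P) = \sum_k cc a b k *: row k P) ->
  forall x k, ricci_form (bracket_of_consts C) P x (row k P) = \sum_a (x *m Q) 0 a * Mf cc a k.
Proof.
move=> PQ Hc x k.
have QP := mulmx1C PQ.
have B := brQ QP PQ Hc.
have ip1 : forall y i j, ip_of P (bracket_of_consts C y (row i P)) (row j P)
     = \sum_a (y *m Q) 0 a * cc a i j.
  move=> y i j; rewrite (@ipQ _ _ P Q _ _ PQ) rowPQ // sum_deltaR B; apply: eq_bigr => a _.
  rewrite rowPQ //.
  under eq_bigr do rewrite -mulrA.
  by rewrite -big_distrr /= sum_deltaL.
have ip2 : forall y i j, ip_of P (bracket_of_consts C (row i P) (row j P)) y
     = \sum_l cc i j l * (y *m Q) 0 l.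
  move=> y i j; rewrite (@ipQ _ _ P Q _ _ PQ); apply: eq_bigr => l _; congr (_ * _).
  rewrite B !rowPQ //.
  under eq_bigr => a _ do under eq_bigr => b _ do rewrite -mulrA.
  under eq_bigr => a _ do rewrite -big_distrr /= sum_deltaL.
  by rewrite sum_deltaL.
rewrite /ricci_form /=.
under eq_bigr do under eq_bigr do rewrite !ip1 rowPQ // sum_deltaL.
under [in X in _ + X]eq_bigr do under eq_bigr do rewrite !ip2 rowPQ // sum_deltaR.
rewrite /Mf.
rewrite L_a L_b.
under [RHS]eq_bigr do rewrite mulrDr.
rewrite big_split /= !mulr_sumr; congr (_ + _); apply: eq_bigr => a _; ring.
Qed.

Lemma crit (R : realType) n (C : 'I_n -> 'I_n -> 'rV[R]_n) (P Q : 'M[R]_n)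
  (cc : 'I_n -> 'I_n -> 'I_n -> R) (c : R) (nr : 'I_n -> R) :
  P *m Q = 1%:M ->
  (forall a b, bracket_of_consts C (row a P) (row b P) = \sum_k cc a b k *: row k P) ->
  (forall a b, Mf cc a b = if a == b then c + nr a else 0) ->
  (forall a b k, cc a b k * nr k = cc a b k * (nr a + nr b)) ->
  is_nilsoliton (bracket_of_consts C) P.
Proof.
move=> PQ Hc HM Hd.
have QP := mulmx1C PQ.
have B := brQ QP PQ Hc.
pose N : 'M[R]_n := diag_mx (\row_i nr i).
have G : forall w : 'rV_n, w = (w *m Q) *m P by move=> w; rewrite -mulmxA QP mulmx1.
split; first exact: (mulmx1_unit PQ).1.
exists c, (Q *m N *m P); split.
- move=> x y.
  have E : forall w : 'rV_n, w *m (Q *m N *m P) *m Q = (w *m Q) *m N.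
    by move=> w; rewrite !mulmxA -(mulmxA _ P Q) PQ mulmx1.
  have F : forall w : 'rV_n, w *m (Q *m N *m P) = (w *m Q *m N) *m P.
    by move=> w; rewrite !mulmxA.
  rewrite F [RHS]G; congr (_ *m P).
  rewrite mulmxDl; apply/rowP => k.
  have DN : forall (w : 'rV_n) a, (w *m N) 0 a = w 0 a * nr a.
    by move=> w a; rewrite /N mul_mx_diag !mxE.
  rewrite {1}/N mul_mx_diag [LHS]mxE [RHS]mxE !B !E [(\row__ _) 0 k]mxE.
  rewrite big_distrl -big_split; apply: eq_bigr => a _.
  rewrite big_distrl -big_split; apply: eq_bigr => b _ /=.
  rewrite !DN -mulrA Hd; ring.
- move=> x; rewrite /ricci_op.
  under eq_bigr do rewrite (ricci_f PQ Hc).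
  pose M : 'M[R]_n := \matrix_(a, b) Mf cc a b.
  have -> : \sum_k (\sum_a (x *m Q) 0 a * Mf cc a k) *: row k P = (x *m Q *m M) *m P.
    rewrite [RHS]mulmx_sum_row; apply: eq_bigr => k _; congr (_ *: _).
    by rewrite [RHS]mxE; apply: eq_bigr => a _; rewrite [M _ _]mxE.
  have -> : M = c%:M + N.
    apply/matrixP => a b; rewrite !mxE HM.
    by case: eqP => [->|_]; rewrite ?mulr1n ?mulr0n ?addr0.
  rewrite mulmxDr mulmxDl mul_mx_scalar -scalemxAl -G !mulmxA.
  done.
Qed.


Lemma inord_eq (i : 'I_7) k : (k < 7)%N -> (i == inord k) = (nat_of_ord i == k).
Proof. by move=> hk; rewrite -val_eqE /= inordK. Qed.

Definition bmN (R : realType) (i j : nat) : R :=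
  match i, j with
  | 0, 0 => 1 | 0, 1 => 1
  | 1, 0 => 1 | 1, 1 => -1
  | 2, 2 => 1
  | 3, 3 => 1 | 3, 4 => 1
  | 4, 3 => 1 | 4, 4 => -1
  | 5, 5 => 1 | 6, 6 => 1
  | _, _ => 0 end.

Definition cnN (R : realType) (a b k : nat) : R :=
  match a, b, k with
  | 0, 1, 2 => -2 | 1, 0, 2 => 2
  | 0, 2, 3 => 1 | 2, 0, 3 => -1
  | 1, 2, 4 => 1 | 2, 1, 4 => -1
  | 0, 3, 5 => 2 | 3, 0, 5 => -2
  | 1, 4, 5 => 2 | 4, 1, 5 => -2
  | 0, 5, 6 => 2 | 5, 0, 6 => -2
  | 2, 4, 6 => -2 | 4, 2, 6 => 2
  | _, _, _ => 0 end.

Definition ncN (R : realType) (i j k : nat) : R :=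
  match i, j, k with
  | 0, 1, 2 => 1 | 1, 0, 2 => -1
  | 0, 2, 3 => 1 | 2, 0, 3 => -1
  | 0, 3, 5 => 1 | 3, 0, 5 => -1
  | 0, 5, 6 => 1 | 5, 0, 6 => -1
  | 1, 2, 4 => 1 | 2, 1, 4 => -1
  | 1, 4, 5 => 1 | 4, 1, 5 => -1
  | 1, 5, 6 => 1 | 5, 1, 6 => -1
  | 2, 3, 6 => -1 | 3, 2, 6 => 1
  | 2, 4, 6 => 1 | 4, 2, 6 => -1
  | _, _, _ => 0 end.

Lemma sum7 (R : realType) (F : 'I_7 -> R) : \sum_(i < 7) F i =
  F (@Ordinal 7 0 isT) + F (@Ordinal 7 1 isT) + F (@Ordinal 7 2 isT) + F (@Ordinal 7 3 isT)
  + F (@Ordinal 7 4 isT) + F (@Ordinal 7 5 isT) + F (@Ordinal 7 6 isT).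
Proof.
rewrite !big_ord_recl big_ord0 addr0 !addrA.
by repeat congr (_ + _); congr F; apply: val_inj.
Qed.

Ltac ocase i := case: i => [[|[|[|[|[|[|[|?]]]]]]] ?] //.

Lemma ncE (R : realType) (i j m : 'I_7) : (n7_consts R i j) 0 m = ncN R i j m.
Proof.
ocase i; ocase j; ocase m; rewrite /n7_consts /= ?/ebasis ?mxE ?oppr0 ?inord_eq //=.
all: by rewrite ?oppr0 ?opprK.
Qed.

Lemma Hcn_nat (R : realType) (a b m : 'I_7) :
  \sum_(i < 7) \sum_(j < 7) (bmN R a i * bmN R b j) * ncN R i j m
  = \sum_(k < 7) cnN R a b k * bmN R k m.
Proof.
rewrite !sum7.
ocase a; ocase b; ocase m; cbv beta iota delta [cnN bmN ncN nat_of_ord]; by ring.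
Qed.


Lemma inord_eq_unused (i : 'I_7) k : (k < 7)%N -> (i == inord k) = (nat_of_ord i == k).
Proof. by move=> hk; rewrite -val_eqE /= inordK. Qed.

Definition bmiN (R : realType) (i j : nat) : R :=
  match i, j with
  | 0, 0 => 1/2 | 0, 1 => 1/2
  | 1, 0 => 1/2 | 1, 1 => -(1/2)
  | 2, 2 => 1
  | 3, 3 => 1/2 | 3, 4 => 1/2
  | 4, 3 => 1/2 | 4, 4 => -(1/2)
  | 5, 5 => 1 | 6, 6 => 1
  | _, _ => 0 end.

Definition zN (R : realType) (i : nat) : R :=
  match i with 0 => 1 | 1 => 2 | 2 => 2 | 3 => 13/10 | 4 => 13/20 | 5 => 13/10 | _ => 169/150 end.

Definition dN (R : realType) (i : nat) : R :=
  match i with 0 => 1 | 1 => 1 | 2 => 2 | 3 => 3 | 4 => 3 | 5 => 4 | _ => 5 end.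

Definition tt (R : realType) (i : nat) : R := Num.sqrt (zN R i).

Lemma zN_gt0 (R : realType) i : 0 < zN R i.
Proof. by do 7 (case: i => [|i]; first by rewrite /zN; lra); rewrite /zN; lra. Qed.

Lemma tt_sq (R : realType) i : tt R i * tt R i = zN R i.
Proof. by rewrite /tt -expr2 sqr_sqrtr // ltW // zN_gt0. Qed.

Lemma tt_neq0 (R : realType) i : tt R i != 0.
Proof. by rewrite /tt gt_eqF // sqrtr_gt0 zN_gt0. Qed.

Lemma BB (R : realType) (i j : 'I_7) :
  \sum_(k < 7) bmN R i k * bmiN R k j = (i == j)%:R.
Proof.
rewrite !sum7.
ocase i; ocase j; rewrite -val_eqE /=; cbv beta iota delta [bmN bmiN nat_of_ord eqn]; by field.
Qed.

Definition S1 (R : realType) (a b : 'I_7) : R :=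
  \sum_(i < 7) \sum_(j < 7) zN R i / zN R j * (cnN R a i j * cnN R b i j).
Definition S2 (R : realType) (a b : 'I_7) : R :=
  \sum_(i < 7) \sum_(j < 7) zN R i * zN R j * (cnN R i j a * cnN R i j b).

Definition s1N (R : realType) (i : nat) : R :=
  match i with 0 => 184/13 | 1 => 92/13 | 2 => 80/13 | 3 => 40/13
  | 4 => 2240/169 | 5 => 600/169 | _ => 0 end.
Definition s2N (R : realType) (i : nat) : R :=
  match i with 0 => 0 | 1 => 0 | 2 => 16 | 3 => 4
  | 4 => 8 | 5 => 104/5 | _ => 104/5 end.

Lemma S1E (R : realType) (a b : 'I_7) :
  S1 R a b = if nat_of_ord a == nat_of_ord b then s1N R a else 0.
Proof.
rewrite /S1 !sum7.
ocase a; ocase b; cbv beta iota delta [cnN zN s1N nat_of_ord eqn]; by field.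
Qed.

Lemma S2E (R : realType) (a b : 'I_7) :
  S2 R a b = if nat_of_ord a == nat_of_ord b then s2N R a else 0.
Proof.
rewrite /S2 !sum7.
ocase a; ocase b; cbv beta iota delta [cnN zN s2N nat_of_ord eqn]; by field.
Qed.

Lemma Hd_nat (R : realType) (a b k : 'I_7) :
  cnN R a b k * dN R k = cnN R a b k * (dN R a + dN R b).
Proof.
ocase a; ocase b; ocase k; cbv beta iota delta [cnN dN nat_of_ord]; by ring.
Qed.


Definition Bm (R : realType) : 'M[R]_7 := \matrix_(i, j) bmN R i j.
Definition Pm (R : realType) : 'M[R]_7 := \matrix_(i, j) (tt R i * bmN R i j).
Definition Qm (R : realType) : 'M[R]_7 := \matrix_(i, j) (bmiN R i j / tt R j).
Definition ccN (R : realType) (a b k : 'I_7) : R := tt R a * tt R b / tt R k * cnN R a b k.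

Lemma PQ1 (R : realType) : Pm R *m Qm R = 1%:M.
Proof.
apply/matrixP => i j; rewrite !mxE.
under eq_bigr do rewrite !mxE.
have -> : \sum_(k < 7) tt R i * bmN R i k * (bmiN R k j / tt R j)
        = tt R i / tt R j * \sum_(k < 7) bmN R i k * bmiN R k j.
  by rewrite big_distrr; apply: eq_bigr => k _ /=; ring.
rewrite BB; case: eqP => [->|_]; last by rewrite mulr0.
by rewrite divff ?tt_neq0 // mulr1.
Qed.

Lemma brZ (R : realType) n (C : 'I_n -> 'I_n -> 'rV[R]_n) s r u v :
  bracket_of_consts C (s *: u) (r *: v) = (s * r) *: bracket_of_consts C u v.
Proof.
rewrite /bracket_of_consts scaler_sumr; apply: eq_bigr => i _.
rewrite scaler_sumr; apply: eq_bigr => j _.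
by rewrite scalerA !mxE; congr (_ *: _); ring.
Qed.

Lemma rowP_ (R : realType) a : row a (Pm R) = tt R a *: row a (Bm R).
Proof. by apply/rowP => j; rewrite !mxE. Qed.

Lemma Hcn (R : realType) (a b : 'I_7) :
  bracket_of_consts (n7_consts R) (row a (Bm R)) (row b (Bm R))
  = \sum_(k < 7) cnN R a b k *: row k (Bm R).
Proof.
apply/rowP => m; rewrite /bracket_of_consts !summxE.
have := Hcn_nat R a b m => H.
transitivity (\sum_(i < 7) \sum_(j < 7) (bmN R a i * bmN R b j) * ncN R i j m).
  apply: eq_bigr => i _; rewrite summxE; apply: eq_bigr => j _.
  by rewrite !mxE ncE.
rewrite H; apply: eq_bigr => k _; by rewrite !mxE.
Qed.

Lemma Hc (R : realType) (a b : 'I_7) :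
  bracket_of_consts (n7_consts R) (row a (Pm R)) (row b (Pm R))
  = \sum_k ccN R a b k *: row k (Pm R).
Proof.
rewrite !rowP_ brZ Hcn scaler_sumr; apply: eq_bigr => k _.
rewrite rowP_ !scalerA; congr (_ *: _).
rewrite /ccN; field; exact: tt_neq0.
Qed.

Lemma HM (R : realType) (a b : 'I_7) :
  Mf (ccN R) a b = if a == b then -10 + 38/13 * dN R a else 0.
Proof.
rewrite /Mf.
have E1 : \sum_i \sum_j ccN R a i j * ccN R b i j = tt R a * tt R b * S1 R a b.
  rewrite /S1 big_distrr; apply: eq_bigr => i _; rewrite big_distrr; apply: eq_bigr => j _ /=.
  rewrite /ccN -(tt_sq R i) -(tt_sq R j); field; exact: tt_neq0.
have E2 : \sum_i \sum_j ccN R i j a * ccN R i j b = S2 R a b / (tt R a * tt R b).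
  rewrite /S2 mulr_suml; apply: eq_bigr => i _; rewrite mulr_suml; apply: eq_bigr => j _ /=.
  rewrite /ccN -(tt_sq R i) -(tt_sq R j).
  by field; rewrite ?tt_neq0 ?mulf_neq0 ?tt_neq0.
rewrite E1 E2 S1E S2E.
case: (eqVneq a b) => [<-|ne].
  rewrite !eqxx tt_sq; clear E1 E2.
  by ocase a; cbv beta iota delta [s1N s2N zN dN nat_of_ord]; field.
have -> : (nat_of_ord a == nat_of_ord b) = false.
  by apply/eqP => h; move/eqP: ne; apply; apply: val_inj.
by rewrite ?(negbTE ne) mul0r !mulr0 addr0.
Qed.

Lemma Hd (R : realType) (a b k : 'I_7) :
  ccN R a b k * (38/13 * dN R k) = ccN R a b k * (38/13 * dN R a + 38/13 * dN R b).
Proof.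
rewrite /ccN.
transitivity (tt R a * tt R b / tt R k * (38/13) * (cnN R a b k * dN R k)); first by ring.
rewrite Hd_nat; ring.
Qed.

Theorem mainTheorem13 (R : realType) : einstein_nilradical (n7_bracket R).
Proof.
exists (Pm R).
apply: (@crit R 7 (n7_consts R) (Pm R) (Qm R) (ccN R) (-10) (fun a => 38/13 * dN R a)).
- exact: PQ1.
- exact: Hc.
- exact: HM.
- exact: Hd.
Qed.
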